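(* Let $n\ge 2$ and let $q=e^{i\theta}$ with $\theta\in\mathbb{R}$ and $|\theta|<2\pi/n$ (so $q$ is specialized to a complex number). Then for every $\sigma\in\mathrm{B}_n$, every pole $s\in\mathbb{C}$ of $\zeta(e^{-s},\sigma;\beta_{n,q})$ satisfies $\mathrm{Re}(s)=0$.
   Context: $\mathrm{B}_n$ is the braid group on $n$ strands with standard generators $\sigma_1,\dots,\sigma_{n-1}$. The Burau representation $\beta_{n,q}$ is the homomorphism from $\mathrm{B}_n$ to invertible $n\times n$ matrices over $\mathbb{Z}[q^{\pm1}]$ with $\beta_{n,q}(\sigma_i)=I_{i-1}\oplus\begin{pmatrix}1-q&1\\ q&0\end{pmatrix}\oplus I_{n-i-1}$; for $q\in\mathbb{C}^\times$ it is specialized to complex matrices. The braid zeta function is $\zeta(s,\sigma;\beta_{n,q}):=\det(I_n-\beta_{n,q}(\sigma)s)^{-1}$. *)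

(* Defs.v *)
From Stdlib Require Import Reals List Arith.
Open Scope R_scope.

Record Cx := mkC { Re : R; Im : R }.

Definition C0 : Cx := mkC 0 0.
Definition C1 : Cx := mkC 1 0.
Definition Cadd (z w : Cx) : Cx := mkC (Re z + Re w) (Im z + Im w).
Definition Copp (z : Cx) : Cx := mkC (- Re z) (- Im z).
Definition Csub (z w : Cx) : Cx := Cadd z (Copp w).
Definition Cmul (z w : Cx) : Cx :=
  mkC (Re z * Re w - Im z * Im w) (Re z * Im w + Im z * Re w).
Definition Cnorm (z : Cx) : R := sqrt (Re z * Re z + Im z * Im z).
(* multiplicative inverse (Cinv C0 = C0, a junk value) *)
Definition Cinv (z : Cx) : Cx :=
  let d := Re z * Re z + Im z * Im z in mkC (Re z / d) (- Im z / d).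
Definition Cexp (z : Cx) : Cx :=
  mkC (exp (Re z) * cos (Im z)) (exp (Re z) * sin (Im z)).

(* ---------- Square matrices (entries indexed from 0; only indices < n matter) ---------- *)
Definition Mat := nat -> nat -> Cx.

Fixpoint Csum (m : nat) (f : nat -> Cx) : Cx :=
  match m with O => C0 | S k => Cadd (Csum k f) (f k) end.

Definition idM : Mat := fun i j => if Nat.eqb i j then C1 else C0.
Definition mulM (n : nat) (A B : Mat) : Mat :=
  fun i j => Csum n (fun k => Cmul (A i k) (B k j)).
Definition subM (A B : Mat) : Mat := fun i j => Csub (A i j) (B i j).
Definition scaleM (c : Cx) (A : Mat) : Mat := fun i j => Cmul c (A i j).

Definition minor0 (M : Mat) (j : nat) : Mat :=
  fun i k => M (S i) (if Nat.ltb k j then k else S k).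

Fixpoint det (n : nat) (M : Mat) : Cx :=
  match n with
  | O => C1
  | S m => Csum (S m) (fun j =>
             Cmul (if Nat.even j then C1 else Copp C1) (Cmul (M O j) (det m (minor0 M j))))
  end.

(* A letter (k, true) stands for sigma_{k+1}, (k, false) for sigma_{k+1}^{-1}.
   Elements of B_n are represented by words in the generators sigma_1..sigma_{n-1}
   and their inverses, i.e. letters with k < n - 1. *)
Definition letter := (nat * bool)%type.
Definition braid_word := list letter.
Definition valid_word (n : nat) (w : braid_word) : Prop :=
  Forall (fun l => (fst l < n - 1)%nat) w.

(* beta_{n,q}(sigma_{k+1}) = I_k (+) [[1-q, 1],[q, 0]] (+) I_{n-k-2} *)
Definition burau_gen (q : Cx) (k : nat) : Mat := fun i j =>
  if Nat.eqb i k then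
    (if Nat.eqb j k then Csub C1 q else if Nat.eqb j (S k) then C1 else C0)
  else if Nat.eqb i (S k) then
    (if Nat.eqb j k then q else if Nat.eqb j (S k) then C0 else C0)
  else idM i j.

(* beta_{n,q}(sigma_{k+1}^{-1}) = I_k (+) [[1-q, 1],[q, 0]]^{-1} (+) I_{n-k-2},
   where [[1-q,1],[q,0]]^{-1} = [[0, q^{-1}],[1, 1-q^{-1}]] *)
Definition burau_gen_inv (q : Cx) (k : nat) : Mat := fun i j =>
  if Nat.eqb i k then
    (if Nat.eqb j k then C0 else if Nat.eqb j (S k) then Cinv q else C0)
  else if Nat.eqb i (S k) then
    (if Nat.eqb j k then C1 else if Nat.eqb j (S k) then Csub C1 (Cinv q) else C0)
  else idM i j.

Definition burau_letter (q : Cx) (l : letter) : Mat :=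
  if snd l then burau_gen q (fst l) else burau_gen_inv q (fst l).

Definition burau (n : nat) (q : Cx) (w : braid_word) : Mat :=
  fold_right (fun l M => mulM n (burau_letter q l) M) idM w.

Definition braid_zeta (n : nat) (q : Cx) (w : braid_word) (z : Cx) : Cx :=
  Cinv (det n (subM idM (scaleM z (burau n q w)))).

Definition is_pole (f : Cx -> Cx) (s0 : Cx) : Prop :=
  forall M : R, exists delta : R, delta > 0 /\
    forall s : Cx, 0 < Cnorm (Csub s s0) < delta -> Cnorm (f s) > M.

(* Main.v *)
Require Import Defs.
From Stdlib Require Import Reals List Arith Lra Lia Nsatz FunctionalExtensionality.
From mathcomp Require ssreflect ssrfun ssrbool eqtype ssrnat seq fintype bigop ssralg matrix mxalgebra.
From mathcomp Require complex Rstruct.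
Open Scope R_scope.
Set Bullet Behavior "Strict Subproofs".

Definition matvec (n : nat) (M : Mat) (x : nat -> Cx) : nat -> Cx :=
  fun i => Csum n (fun k => Cmul (M i k) (x k)).

Module Bridge.
Import ssreflect ssrfun ssrbool eqtype ssrnat seq fintype bigop ssralg matrix mxalgebra complex Rstruct.
Import GRing.Theory.
Local Open Scope ring_scope.
Definition phi (z : Cx) : R[i] := Complex (Defs.Re z) (Defs.Im z).
Definition psi (w : R[i]) : Cx := mkC (complex.Re w) (complex.Im w).
Lemma phi_add z w : phi (Cadd z w) = phi z + phi w.
Proof. reflexivity. Qed.
Lemma phi_mul z w : phi (Cmul z w) = phi z * phi w.
Proof. reflexivity. Qed.
Lemma phi_opp z : phi (Copp z) = - phi z.
Proof. reflexivity. Qed.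
Lemma phi0 : phi Defs.C0 = 0. Proof. reflexivity. Qed.
Lemma phi1 : phi Defs.C1 = 1. Proof. reflexivity. Qed.
Lemma phi_psi w : phi (psi w) = w. Proof. by case: w. Qed.
Lemma phi_inj z w : phi z = phi w -> z = w.
Proof. by case: z => a b; case: w => c d [-> ->]. Qed.

Lemma phi_Csum m f : phi (Csum m f) = \sum_(j < m) phi (f j).
Proof.
elim: m => [|m IH]; first by rewrite big_ord0.
by rewrite big_ord_recr /= phi_add IH.
Qed.

Lemma phi_sign j : phi (if Nat.even j then Defs.C1 else Copp Defs.C1) = (-1) ^+ j.
Proof.
have H : forall j, phi (if Nat.even j then Defs.C1 else Copp Defs.C1) = (-1) ^+ j /\
   phi (if Nat.even j.+1 then Defs.C1 else Copp Defs.C1) = (-1) ^+ j.+1.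
  elim=> [|k [IH1 IH2]]; first by split; [rewrite expr0 | rewrite expr1].
  split; first exact IH2.
  rewrite (_ : Nat.even k.+2 = Nat.even k) // IH1 !exprS mulrA mulrN1 opprK mul1r //.
exact: (H j).1.
Qed.

Lemma phi_det n (M : Mat) :
  phi (det n M) = \det (\matrix_(i < n, j < n) phi (M i j)).
Proof.
elim: n M => [|n IH] M; first by rewrite det_mx00.
rewrite (expand_det_row _ ord0) /=. rewrite -/(Csum n.+1 _) phi_Csum.
apply: eq_bigr => j _.
rewrite phi_mul phi_mul IH mxE /cofactor phi_sign add0n.
rewrite mulrA [_ * phi _]mulrC -mulrA; congr (_ * (_ * _)).
congr (\det _); apply/matrixP => i k; rewrite !mxE /minor0 /=.
congr (phi (M _ _)).
rewrite /bump; case: (ltnP k j) => Hk.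
  have -> : Nat.ltb k j = true by apply/Nat.ltb_lt/ltP.
  by rewrite add0n.
have -> : Nat.ltb k j = false by apply/Nat.ltb_ge/leP.
by rewrite add1n.
Qed.

Lemma kernel n (A : Mat) : det n A = Defs.C0 ->
  exists x : nat -> Cx, (exists j, Peano.lt j n /\ x j <> Defs.C0) /\
    forall i, Peano.lt i n -> Csum n (fun k => Cmul (A i k) (x k)) = Defs.C0.
Proof.
move=> H0.
set Am := \matrix_(i < n, j < n) phi (A i j).
have : \det Am^T == 0 by rewrite det_tr /Am -phi_det H0.
case/det0P => v vnz Hv.
pose x := fun k : nat => match (insub k : option 'I_n) with
  | Some i => psi (v ord0 i) | None => Defs.C0 end.
have xE : forall i : 'I_n, phi (x i) = v ord0 i.
  by move=> i; rewrite /x valK phi_psi.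
exists x; split.
  have [j Hj] : exists j, v ord0 j != 0.
    apply/existsP; apply: contraR vnz => /existsPn Hall.
    by apply/eqP/matrixP => a b; rewrite (ord1 a) mxE; apply/eqP/negbNE.
  exists j; split; first by apply/ltP.
  by move=> Hx; move: Hj; rewrite -xE Hx phi0 eqxx.
move=> i /ltP Hi; apply: phi_inj; rewrite phi0 phi_Csum.
have Hvi : \sum_j v ord0 j * Am^T j (Ordinal Hi) = 0.
  by have := congr1 (fun M : 'M[R[i]]_(1,n) => M ord0 (Ordinal Hi)) Hv; rewrite !mxE.
apply: (etrans _ Hvi).
apply: eq_bigr => k _; rewrite phi_mul xE !mxE mulrC //.
Qed.

Lemma phi_sub z w : phi (Csub z w) = phi z - phi w.
Proof. reflexivity. Qed.

Lemma matvec_mul n A B x i :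
  matvec n (mulM n A B) x i = matvec n A (matvec n B x) i.
Proof.
apply: phi_inj; rewrite /matvec /mulM !phi_Csum.
under eq_bigr => k _ do rewrite phi_mul phi_Csum mulr_suml.
rewrite exchange_big /=; apply: eq_bigr => l _.
rewrite phi_mul phi_Csum mulr_sumr; apply: eq_bigr => k _.
by rewrite !phi_mul mulrA.
Qed.

Lemma Csum_one n f a : Peano.lt a n ->
  (forall j, Peano.lt j n -> j <> a -> f j = Defs.C0) -> Csum n f = f a.
Proof.
move=> /ltP Ha Hf; apply: phi_inj; rewrite phi_Csum (bigD1 (Ordinal Ha)) //=.
rewrite big1 ?addr0 // => j Hj; rewrite Hf ?phi0 //; first by apply/ltP.
by move=> E; move: Hj; rewrite -val_eqE /= E eqxx.
Qed.

Lemma Csum_two n f a b : Peano.lt a n -> Peano.lt b n -> a <> b ->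
  (forall j, Peano.lt j n -> j <> a -> j <> b -> f j = Defs.C0) ->
  Csum n f = Cadd (f a) (f b).
Proof.
move=> /ltP Ha /ltP Hb Hab Hf; apply: phi_inj; rewrite phi_Csum phi_add.
rewrite (bigD1 (Ordinal Ha)) //= (bigD1 (Ordinal Hb)) /=; last first.
  by rewrite -val_eqE /=; apply/eqP => E; apply: Hab.
rewrite big1 ?addr0 // => j /andP [Hj1 Hj2]; rewrite Hf ?phi0 //; first by apply/ltP.
  by move=> E; move: Hj1; rewrite -val_eqE /= E eqxx.
by move=> E; move: Hj2; rewrite -val_eqE /= E eqxx.
Qed.

Lemma matvec_id n x i : Peano.lt i n -> matvec n idM x i = x i.
Proof.
move=> Hi; rewrite /matvec (Csum_one _ _ i Hi).
  by apply: phi_inj; rewrite phi_mul /idM Nat.eqb_refl phi1 mul1r.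
move=> j _ Hj; apply: phi_inj; rewrite phi_mul /idM phi0.
have -> : Nat.eqb i j = false by apply/Nat.eqb_neq => E; apply: Hj; rewrite E.
by rewrite phi0 mul0r.
Qed.

Lemma kernel_eq n z B x i : Peano.lt i n ->
  Csum n (fun k => Cmul (subM idM (scaleM z B) i k) (x k)) =
  Csub (x i) (Cmul z (matvec n B x i)).
Proof.
move=> Hi; apply: phi_inj; rewrite phi_sub -(matvec_id n x i Hi) /matvec.
rewrite phi_mul !phi_Csum mulr_sumr -sumrB; apply: eq_bigr => k _.
by rewrite /subM /scaleM phi_mul phi_sub !phi_mul mulrBl mulrA.
Qed.
End Bridge.


Lemma Cx_ext z w : Re z = Re w -> Im z = Im w -> z = w.
Proof. destruct z, w; simpl; intros; subst; reflexivity. Qed.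
Ltac cx := apply Cx_ext; simpl; ring.

Lemma Csum_ext m f g : (forall j, (j < m)%nat -> f j = g j) -> Csum m f = Csum m g.
Proof.
  induction m; intros H; simpl; [reflexivity|].
  rewrite IHm by (intros; apply H; lia). rewrite H by lia. reflexivity.
Qed.

Fixpoint rsum (m : nat) (f : nat -> R) : R :=
  match m with O => 0 | S k => rsum k f + f k end.

Lemma rsum_ext m f g : (forall j, (j < m)%nat -> f j = g j) -> rsum m f = rsum m g.
Proof.
  induction m; intros H; simpl; [reflexivity|].
  rewrite IHm by (intros; apply H; lia). rewrite H by lia. reflexivity.
Qed.

Lemma rsum_change1 m f g a : (a < m)%nat ->
  (forall j, (j < m)%nat -> j <> a -> g j = f j) -> rsum m g = rsum m f + (g a - f a).
Proof.
  induction m; intros Ha H; [lia|]. simpl.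
  destruct (Nat.eq_dec a m).
  - subst. rewrite (rsum_ext m g f) by (intros; apply H; lia). ring.
  - rewrite IHm by (try lia; intros; apply H; lia). rewrite (H m) by lia. ring.
Qed.

Lemma rsum_change2 m f g a b : (a < m)%nat -> (b < m)%nat -> a <> b ->
  (forall j, (j < m)%nat -> j <> a -> j <> b -> g j = f j) ->
  rsum m g = rsum m f + (g a - f a) + (g b - f b).
Proof.
  intros Ha Hb Hab H.
  set (h := fun j => if Nat.eq_dec j a then g j else f j).
  rewrite (rsum_change1 m h g b Hb).
  - rewrite (rsum_change1 m f h a Ha).
    + unfold h. destruct (Nat.eq_dec a a); [|congruence].
      destruct (Nat.eq_dec b a); [congruence|]. ring.
    + intros j _ Hj. unfold h. destruct (Nat.eq_dec j a); congruence.
  - intros j Hj Hjb. unfold h. destruct (Nat.eq_dec j a); [reflexivity|].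
    apply H; auto.
Qed.

Lemma rsum_scale m a f : rsum m (fun j => a * f j) = a * rsum m f.
Proof. induction m; simpl; [ring|]. rewrite IHm. ring. Qed.

Definition N2 (z : Cx) := Re z * Re z + Im z * Im z.
Definition E2 (c sg : R) (a b : Cx) :=
  c * (Re a * Re b + Im a * Im b) + sg * (Re a * Im b - Im a * Re b).
Definition Qp c sg m (P : nat -> Cx) :=
  rsum m (fun j => 2*c*N2 (P (S j)) - 2*E2 c sg (P j) (P (S j))).
Definition Qx c sg n (x : nat -> Cx) := Qp c sg n (fun j => Csum j x).

Lemma N2_C0 : N2 Defs.C0 = 0. Proof. unfold N2; simpl; ring. Qed.
Lemma E2_C0l c sg b : E2 c sg Defs.C0 b = 0. Proof. unfold E2; simpl; ring. Qed.
Lemma E2_C0r c sg b : E2 c sg b Defs.C0 = 0. Proof. unfold E2; simpl; ring. Qed.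
Lemma N2_ge0 z : 0 <= N2 z. Proof. unfold N2; nra. Qed.
Lemma N2_0 z : N2 z <= 0 -> z = Defs.C0.
Proof. unfold N2; intros H; apply Cx_ext; simpl; nra. Qed.

Fixpoint spair (c : R) (k : nat) : R * R :=
  match k with O => (0, 1) | S k => let p := spair c k in (snd p, 2*c*snd p - fst p) end.
Definition sq c k := fst (spair c k).
Lemma sq0 c : sq c 0 = 0. Proof. reflexivity. Qed.
Lemma sq1 c : sq c 1 = 1. Proof. reflexivity. Qed.
Lemma sqSS c k : sq c (S (S k)) = 2*c*sq c (S k) - sq c k.
Proof. unfold sq; simpl. reflexivity. Qed.

Lemma sos c sg A B a b : c*c+sg*sg = 1 ->
  A*A*N2 a + B*B*N2 b - 2*A*B*E2 c sg a b >= 0.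
Proof.
  intros H. unfold N2, E2.
  assert (E : A*A*(Re a*Re a+Im a*Im a) + B*B*(Re b*Re b+Im b*Im b)
     - 2*A*B*(c*(Re a*Re b+Im a*Im b) + sg*(Re a*Im b - Im a*Re b))
     = (A*Re a - B*(c*Re b + sg*Im b))*(A*Re a - B*(c*Re b + sg*Im b))
       + (A*Im a - B*(c*Im b - sg*Re b))*(A*Im a - B*(c*Im b - sg*Re b))
       - B*B*(Re b*Re b+Im b*Im b)*(c*c+sg*sg-1)) by ring.
  rewrite E, H. replace (1 - 1) with 0 by ring. rewrite Rmult_0_r, Rminus_0_r.
  apply Rle_ge, Rplus_le_le_0_compat; apply Rle_0_sqr.
Qed.

Lemma Qp_S c sg k u : Qp c sg (S k) u =
  Qp c sg k u + (2*c*N2 (u (S k)) - 2*E2 c sg (u k) (u (S k))).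
Proof. reflexivity. Qed.

Lemma pos_ineq c sg n (u : nat -> Cx) : c*c+sg*sg = 1 ->
  (forall j, (1 <= j <= n)%nat -> sq c j > 0) -> u 0%nat = Defs.C0 ->
  forall k, (k + 1 <= n)%nat -> sq c k * Qp c sg k u >= sq c (S k) * N2 (u k).
Proof.
  intros Hcs Hs Hu0. induction k as [|k IH]; intros Hk.
  - rewrite Hu0, N2_C0, sq0. simpl. lra.
  - rewrite Qp_S, sqSS.
    destruct k as [|k].
    + rewrite Hu0, E2_C0l, sq0, sq1. replace (Qp c sg 0 u) with 0 by reflexivity. apply Req_ge; ring.
    + assert (HA : sq c (S (S k)) > 0) by (apply Hs; lia).
      assert (HB : sq c (S k) > 0) by (apply Hs; lia).
      specialize (IH ltac:(lia)).
      pose proof (sos c sg (sq c (S (S k))) (sq c (S k)) (u (S k)) (u (S (S k))) Hcs) as HS.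
      set (A := sq c (S (S k))) in *. set (B := sq c (S k)) in *.
      set (H := Qp c sg (S k) u) in *. set (N0 := N2 (u (S k))) in *.
      set (N1 := N2 (u (S (S k)))) in *.
      set (E := E2 c sg (u (S k)) (u (S (S k)))) in *.
      assert (B * (A * (H + (2*c*N1 - 2*E)) - (2*c*A - B)*N1) >= 0) by nra.
      assert (A * (H + (2*c*N1 - 2*E)) - (2*c*A - B)*N1 >= 0).
      { destruct (Rlt_or_le (A * (H + (2*c*N1 - 2*E)) - (2*c*A - B)*N1) 0); nra. }
      lra.
Qed.

Lemma pos_zero c sg n (u : nat -> Cx) : c*c+sg*sg = 1 ->
  (forall j, (1 <= j <= n)%nat -> sq c j > 0) -> u 0%nat = Defs.C0 ->
  forall k, (k + 1 <= n)%nat -> Qp c sg k u = 0 -> forall j, (j <= k)%nat -> u j = Defs.C0.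
Proof.
  intros Hcs Hs Hu0. induction k as [|k IH]; intros Hk HQ j Hj.
  - replace j with 0%nat by lia. exact Hu0.
  - assert (Hz : u (S k) = Defs.C0).
    { pose proof (pos_ineq c sg n u Hcs Hs Hu0 (S k) Hk) as HI.
      rewrite HQ in HI. assert (sq c (S (S k)) > 0) by (apply Hs; lia).
      pose proof (N2_ge0 (u (S k))). apply N2_0. nra. }
    destruct (Nat.eq_dec j (S k)); [subst; exact Hz|].
    apply IH; try lia.
    rewrite Qp_S, Hz, N2_C0, E2_C0r in HQ. lra.
Qed.

Lemma eqb_false i j : i <> j -> Nat.eqb i j = false.
Proof. intros; apply Nat.eqb_neq; auto. Qed.

Lemma Cmul_C0 z : Cmul Defs.C0 z = Defs.C0. Proof. cx. Qed.
Lemma Cmul_C1 z : Cmul Defs.C1 z = z. Proof. destruct z; cx. Qed.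

Lemma gen_apply n q k x i : (S (S k) <= n)%nat -> (i < n)%nat ->
  matvec n (burau_gen q k) x i =
  if Nat.eqb i k then Cadd (Cmul (Csub Defs.C1 q) (x k)) (x (S k))
  else if Nat.eqb i (S k) then Cmul q (x k) else x i.
Proof.
  intros Hk Hi. unfold matvec, burau_gen.
  destruct (Nat.eqb_spec i k) as [->|Hik].
  - rewrite (Bridge.Csum_two n _ k (S k)); try lia.
    + rewrite Nat.eqb_refl, (eqb_false (S k) k) by lia. rewrite Nat.eqb_refl, Cmul_C1. reflexivity.
    + intros j Hj H1 H2. rewrite (eqb_false j k), (eqb_false j (S k)) by auto. apply Cmul_C0.
  - destruct (Nat.eqb_spec i (S k)) as [->|Hik1].
    + rewrite (Bridge.Csum_one n _ k); try lia.
      * rewrite Nat.eqb_refl. reflexivity.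
      * intros j Hj H1. rewrite (eqb_false j k) by auto.
        destruct (Nat.eqb j (S k)); apply Cmul_C0.
    + rewrite (Bridge.Csum_one n _ i); try lia.
      * unfold idM. rewrite Nat.eqb_refl. apply Cmul_C1.
      * intros j Hj H1. unfold idM. rewrite (eqb_false i j) by auto. apply Cmul_C0.
Qed.

Lemma inv_apply n q k x i : (S (S k) <= n)%nat -> (i < n)%nat ->
  matvec n (burau_gen_inv q k) x i =
  if Nat.eqb i k then Cmul (Cinv q) (x (S k))
  else if Nat.eqb i (S k) then Cadd (x k) (Cmul (Csub Defs.C1 (Cinv q)) (x (S k))) else x i.
Proof.
  intros Hk Hi. unfold matvec, burau_gen_inv.
  destruct (Nat.eqb_spec i k) as [->|Hik].
  - rewrite (Bridge.Csum_one n _ (S k)); try lia.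
    + rewrite (eqb_false (S k) k) by lia. rewrite Nat.eqb_refl. reflexivity.
    + intros j Hj H1. destruct (Nat.eqb j k); rewrite ?(eqb_false j (S k)) by auto; apply Cmul_C0.
  - destruct (Nat.eqb_spec i (S k)) as [->|Hik1].
    + rewrite (Bridge.Csum_two n _ k (S k)); try lia.
      * rewrite Nat.eqb_refl, (eqb_false (S k) k) by lia. rewrite Nat.eqb_refl, Cmul_C1. reflexivity.
      * intros j Hj H1 H2. rewrite (eqb_false j k), (eqb_false j (S k)) by auto. apply Cmul_C0.
    + rewrite (Bridge.Csum_one n _ i); try lia.
      * unfold idM. rewrite Nat.eqb_refl. apply Cmul_C1.
      * intros j Hj H1. unfold idM. rewrite (eqb_false i j) by auto. apply Cmul_C0.
Qed.

Lemma partial_sums n k x y : (S (S k) <= n)%nat ->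
  (forall i, (i < n)%nat -> i <> k -> i <> S k -> y i = x i) ->
  Cadd (y k) (y (S k)) = Cadd (x k) (x (S k)) ->
  (forall j, (j <= n)%nat -> j <> S k -> Csum j y = Csum j x) /\
  Csum (S k) y = Cadd (Csum k x) (y k).
Proof.
  intros Hk Hout Hpair.
  assert (Hlow : forall j, (j <= k)%nat -> Csum j y = Csum j x).
  { induction j; intros Hj; simpl; [reflexivity|].
    rewrite IHj by lia. rewrite Hout by lia. reflexivity. }
  assert (H2 : Csum (S (S k)) y = Csum (S (S k)) x).
  { simpl. rewrite Hlow by lia.
    transitivity (Cadd (Csum k x) (Cadd (y k) (y (S k)))); [cx|].
    rewrite Hpair. cx. }
  assert (Hhigh : forall d, (S (S k) + d <= n)%nat -> Csum (S (S k) + d) y = Csum (S (S k) + d) x).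
  { induction d; intros Hd.
    - rewrite Nat.add_0_r. exact H2.
    - rewrite Nat.add_succ_r. change (Cadd (Csum (S (S k) + d)%nat y) (y (S (S k) + d)%nat) = Cadd (Csum (S (S k) + d)%nat x) (x (S (S k) + d)%nat)). rewrite IHd by lia. rewrite Hout by lia. reflexivity. }
  split.
  - intros j Hj Hjk. destruct (le_lt_dec j k).
    + apply Hlow; auto.
    + replace j with (S (S k) + (j - S (S k)))%nat by lia. apply Hhigh. lia.
  - simpl. rewrite Hlow by lia. reflexivity.
Qed.

Definition Lloc c sg (p0 r p2 : Cx) :=
  (2*c*N2 r - 2*E2 c sg p0 r) + (2*c*N2 p2 - 2*E2 c sg r p2).

Lemma QS_inv c sg n k x y : (S (S k) <= n)%nat ->
  (forall i, (i < n)%nat -> i <> k -> i <> S k -> y i = x i) ->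
  Cadd (y k) (y (S k)) = Cadd (x k) (x (S k)) ->
  Lloc c sg (Csum k x) (Cadd (Csum k x) (y k)) (Csum (S (S k)) x) =
  Lloc c sg (Csum k x) (Csum (S k) x) (Csum (S (S k)) x) ->
  Qx c sg n y = Qx c sg n x /\ Csum n y = Csum n x.
Proof.
  intros Hk Hout Hpair Hloc.
  destruct (partial_sums n k x y Hk Hout Hpair) as [Hps Hk1].
  split; [|apply Hps; lia].
  unfold Qx, Qp.
  rewrite (rsum_change2 n (fun j => 2*c*N2 (Csum (S j) x) - 2*E2 c sg (Csum j x) (Csum (S j) x)) (fun j => 2*c*N2 (Csum (S j) y) - 2*E2 c sg (Csum j y) (Csum (S j) y)) k (S k)); try lia.
  - assert (E0 : Csum k y = Csum k x) by (apply Hps; lia).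
    assert (E2' : Csum (S (S k)) y = Csum (S (S k)) x) by (apply Hps; lia).
    rewrite E0, E2', Hk1. unfold Lloc in Hloc. lra.
  - intros j Hj H1 H2. rewrite (Hps j), (Hps (S j)) by lia. reflexivity.
Qed.

Lemma local_gen c sg (p a b : Cx) : c*c+sg*sg = 1 ->
  Lloc c sg p (Cadd p (Cadd (Cmul (Csub Defs.C1 (mkC (c*c-sg*sg) (2*c*sg))) a) b))
    (Cadd (Cadd p a) b) =
  Lloc c sg p (Cadd p a) (Cadd (Cadd p a) b).
Proof. intros H. destruct p, a, b. unfold Lloc, N2, E2; simpl. nsatz. Qed.

Lemma local_inv c sg (p a b : Cx) : c*c+sg*sg = 1 ->
  Lloc c sg p (Cadd p (Cmul (mkC (c*c-sg*sg) (-(2*c*sg))) b))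
    (Cadd (Cadd p a) b) =
  Lloc c sg p (Cadd p a) (Cadd (Cadd p a) b).
Proof. intros H. destruct p, a, b. unfold Lloc, N2, E2; simpl. nsatz. Qed.

Lemma letter_inv c sg n k b x : c*c+sg*sg = 1 -> (S (S k) <= n)%nat ->
  Cinv (mkC (c*c-sg*sg) (2*c*sg)) = mkC (c*c-sg*sg) (-(2*c*sg)) ->
  let y := matvec n (burau_letter (mkC (c*c-sg*sg) (2*c*sg)) (k, b)) x in
  Qx c sg n y = Qx c sg n x /\ Csum n y = Csum n x.
Proof.
  intros Hcs Hk Hqi y. unfold y, burau_letter; simpl fst; simpl snd.
  destruct b.
  - apply (QS_inv c sg n k); auto.
    + intros i Hi H1 H2. rewrite gen_apply by lia.
      rewrite (eqb_false i k), (eqb_false i (S k)) by auto. reflexivity.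
    + rewrite !gen_apply by lia. rewrite Nat.eqb_refl, (eqb_false (S k) k), Nat.eqb_refl by lia. cx.
    + rewrite gen_apply by lia. rewrite Nat.eqb_refl.
      replace (Csum (S (S k)) x) with (Cadd (Cadd (Csum k x) (x k)) (x (S k))) by reflexivity.
      replace (Csum (S k) x) with (Cadd (Csum k x) (x k)) by reflexivity.
      apply local_gen; auto.
  - apply (QS_inv c sg n k); auto.
    + intros i Hi H1 H2. rewrite inv_apply by lia.
      rewrite (eqb_false i k), (eqb_false i (S k)) by auto. reflexivity.
    + rewrite !inv_apply by lia. rewrite Nat.eqb_refl, (eqb_false (S k) k), Nat.eqb_refl by lia.
      rewrite Hqi. cx.
    + rewrite inv_apply by lia. rewrite Nat.eqb_refl, Hqi.
      replace (Csum (S (S k)) x) with (Cadd (Cadd (Csum k x) (x k)) (x (S k))) by reflexivity.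
      replace (Csum (S k) x) with (Cadd (Csum k x) (x k)) by reflexivity.
      apply local_inv; auto.
Qed.

Lemma Qx_ext c sg n x y : (forall i, (i < n)%nat -> y i = x i) ->
  Qx c sg n y = Qx c sg n x /\ Csum n y = Csum n x.
Proof.
  intros H.
  assert (Hj : forall j, (j <= n)%nat -> Csum j y = Csum j x).
  { intros j Hj. apply Csum_ext. intros; apply H; lia. }
  split; [|apply Hj; lia].
  unfold Qx, Qp. apply rsum_ext. intros j Hjn. rewrite (Hj j), (Hj (S j)) by lia. reflexivity.
Qed.

Lemma word_inv c sg n w : c*c+sg*sg = 1 ->
  Cinv (mkC (c*c-sg*sg) (2*c*sg)) = mkC (c*c-sg*sg) (-(2*c*sg)) ->
  valid_word n w -> forall x,
  let y := matvec n (burau n (mkC (c*c-sg*sg) (2*c*sg)) w) x in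
  Qx c sg n y = Qx c sg n x /\ Csum n y = Csum n x.
Proof.
  intros Hcs Hqi. induction w as [|l w IH]; intros Hw x y.
  - apply Qx_ext. intros i Hi. unfold y. simpl. apply Bridge.matvec_id. lia.
  - inversion Hw as [|l' w' Hl Hw']; subst.
    assert (Ey : y = matvec n (burau_letter (mkC (c*c-sg*sg) (2*c*sg)) l)
                   (matvec n (burau n (mkC (c*c-sg*sg) (2*c*sg)) w) x)).
    { unfold y. extensionality i. simpl. apply Bridge.matvec_mul. }
    rewrite Ey. destruct l as [k b]. simpl in Hl.
    destruct (letter_inv c sg n k b (matvec n (burau n (mkC (c*c-sg*sg) (2*c*sg)) w) x) Hcs
      ltac:(lia) Hqi) as [H1 H2].
    destruct (IH Hw' x) as [H3 H4].
    rewrite H1, H2. auto.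
Qed.

Lemma Csum_scale m z f : Csum m (fun i => Cmul z (f i)) = Cmul z (Csum m f).
Proof. induction m; simpl; [cx|]. rewrite IHm. cx. Qed.

Lemma Qx_scale c sg n z x : Qx c sg n (fun i => Cmul z (x i)) = N2 z * Qx c sg n x.
Proof.
  unfold Qx, Qp. rewrite <- rsum_scale. apply rsum_ext. intros j _.
  rewrite !Csum_scale. unfold N2, E2. simpl. ring.
Qed.

Lemma no_kernel c sg n w z x : c*c+sg*sg = 1 -> (2 <= n)%nat ->
  Cinv (mkC (c*c-sg*sg) (2*c*sg)) = mkC (c*c-sg*sg) (-(2*c*sg)) ->
  valid_word n w -> (forall j, (1 <= j <= n)%nat -> sq c j > 0) -> N2 z <> 1 ->
  (forall i, (i < n)%nat -> x i = Cmul z (matvec n (burau n (mkC (c*c-sg*sg) (2*c*sg)) w) x i)) ->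
  forall i, (i < n)%nat -> x i = Defs.C0.
Proof.
  intros Hcs Hn Hqi Hw Hs Hz Hx.
  set (y := matvec n (burau n (mkC (c*c-sg*sg) (2*c*sg)) w) x) in *.
  destruct (word_inv c sg n w Hcs Hqi Hw x) as [HQ HS]. fold y in HQ, HS.
  destruct (Qx_ext c sg n x (fun i => Cmul z (y i))) as [HQ2 HS2].
  { intros i Hi. symmetry. apply Hx; auto. }
  rewrite Qx_scale, HQ in HQ2. rewrite Csum_scale, HS in HS2.
  assert (HQ0 : Qx c sg n x = 0).
  { assert ((1 - N2 z) * Qx c sg n x = 0) by lra.
    apply Rmult_integral in H. destruct H; [exfalso; apply Hz; lra|auto]. }
  assert (HS0 : Csum n x = Defs.C0).
  { destruct (Csum n x) as [s1 s2] eqn:ES. destruct z as [z1 z2].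
    unfold N2 in Hz; simpl in Hz. injection HS2; intros E2' E1'.
    assert (Hd : ((1-z1)*(1-z1) + z2*z2) * s1 = 0) by nsatz.
    assert (Hd2 : ((1-z1)*(1-z1) + z2*z2) * s2 = 0) by nsatz.
    assert (Hne : (1-z1)*(1-z1) + z2*z2 <> 0).
    { intro H0. apply Hz. assert (z2 * z2 = 0) by nra. assert (z2 = 0) by nra.
      assert ((1-z1)*(1-z1) = 0) by nra. assert (z1 = 1) by nra. subst. ring. }
    apply Rmult_integral in Hd. apply Rmult_integral in Hd2.
    destruct Hd as [Hd|Hd]; [contradiction|]. destruct Hd2 as [Hd2|Hd2]; [contradiction|].
    subst. reflexivity. }
  set (P := fun j => Csum j x).
  destruct n as [|m]; [lia|].
  unfold Qx in HQ0. fold P in HQ0. rewrite Qp_S in HQ0.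
  assert (HPn : P (S m) = Defs.C0) by exact HS0.
  rewrite HPn, N2_C0, E2_C0r in HQ0.
  assert (HQm : Qp c sg m P = 0) by lra.
  pose proof (pos_zero c sg (S m) P Hcs Hs eq_refl m ltac:(lia) HQm) as HP.
  intros i Hi.
  assert (E : x i = Csub (P (S i)) (P i)) by (unfold P; simpl; destruct (x i); cx).
  rewrite E, (HP i) by lia.
  destruct (Nat.eq_dec i m) as [->|Hne].
  - rewrite HPn. cx.
  - rewrite (HP (S i)) by lia. cx.
Qed.

Lemma sq_one k : sq 1 k = INR k /\ sq 1 (S k) = INR (S k).
Proof.
  induction k as [|k [IH1 IH2]].
  - split; simpl; [reflexivity|]. reflexivity.
  - split; [exact IH2|]. rewrite sqSS, IH1, IH2. rewrite !S_INR. ring.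
Qed.

Lemma sq_sin c ph : cos ph = c -> forall k,
  sq c k * sin ph = sin (INR k * ph) /\ sq c (S k) * sin ph = sin (INR (S k) * ph).
Proof.
  intros Hc k. induction k as [|k [IH1 IH2]].
  - rewrite sq0, sq1. simpl INR. rewrite !Rmult_0_l, !Rmult_1_l, sin_0. split; reflexivity.
  - split; [exact IH2|]. rewrite sqSS.
    replace (INR (S (S k)) * ph) with (INR (S k) * ph + ph) by (rewrite !S_INR; ring).
    replace ((2 * c * sq c (S k) - sq c k) * sin ph) with
      (2 * c * (sq c (S k) * sin ph) - sq c k * sin ph) by ring.
    rewrite IH1, IH2. rewrite sin_plus, <- Hc.
    replace (INR k * ph) with (INR (S k) * ph - ph) by (rewrite S_INR; ring).
    rewrite sin_minus. ring.
Qed.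

Lemma sq_pos n th : (2 <= n)%nat -> Rabs th < 2 * PI / INR n ->
  forall j, (1 <= j <= n)%nat -> sq (cos (th / 2)) j > 0.
Proof.
  intros Hn Hth j Hj.
  assert (HnR : 0 < INR n) by (apply lt_0_INR; lia).
  destruct (Req_dec th 0) as [->|Hth0].
  - replace (0 / 2) with 0 by field. rewrite cos_0.
    rewrite (proj1 (sq_one j)). apply lt_0_INR. lia.
  - set (ph := Rabs th / 2).
    assert (Hph : 0 < ph) by (unfold ph; pose proof (Rabs_pos_lt th Hth0); lra).
    assert (HnPh : INR n * ph < PI).
    { unfold ph. assert (INR n * Rabs th < 2 * PI).
      { apply (Rmult_lt_compat_l (INR n)) in Hth; auto.
        replace (INR n * (2 * PI / INR n)) with (2 * PI) in Hth by (field; lra). exact Hth. }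
      lra. }
    assert (Hc : cos ph = cos (th / 2)).
    { unfold ph. unfold Rabs. destruct (Rcase_abs th).
      - replace (- th / 2) with (- (th / 2)) by field. apply cos_neg.
      - reflexivity. }
    assert (Hj1 : 1 <= INR j) by (apply (le_INR 1); lia).
    assert (Hjn : INR j <= INR n) by (apply le_INR; lia).
    assert (Hsp : 0 < sin ph).
    { apply sin_gt_0; auto. assert (2 <= INR n) by (apply (le_INR 2); lia). nra. }
    assert (Hsj : 0 < sin (INR j * ph)).
    { apply sin_gt_0; nra. }
    rewrite <- (proj1 (sq_sin _ ph Hc j)) in Hsj.
    apply Rlt_gt. destruct (Rlt_or_le 0 (sq (cos (th / 2)) j)); auto. nra.
Qed.

Definition contR (h : Cx -> R) (s0 : Cx) := forall eps, eps > 0 ->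
  exists d, d > 0 /\ forall s, Cnorm (Csub s s0) < d -> Rabs (h s - h s0) < eps.

Lemma contR_const a s0 : contR (fun _ => a) s0.
Proof. intros e He. exists 1. split; [lra|]. intros s _. rewrite Rminus_diag, Rabs_R0. lra. Qed.

Lemma Rabs_le_Cnorm z : Rabs (Re z) <= Cnorm z /\ Rabs (Im z) <= Cnorm z.
Proof.
  unfold Cnorm. split; rewrite <- sqrt_Rsqr_abs; apply sqrt_le_1_alt; unfold Rsqr; nra.
Qed.

Lemma contR_Re s0 : contR (fun s => Re s) s0.
Proof.
  intros e He. exists e. split; [lra|]. intros s Hs.
  pose proof (proj1 (Rabs_le_Cnorm (Csub s s0))) as H. simpl in H.
  replace (Re s - Re s0) with (Re s + - Re s0) by ring. lra.
Qed.

Lemma contR_Im s0 : contR (fun s => Im s) s0.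
Proof.
  intros e He. exists e. split; [lra|]. intros s Hs.
  pose proof (proj2 (Rabs_le_Cnorm (Csub s s0))) as H. simpl in H.
  replace (Im s - Im s0) with (Im s + - Im s0) by ring. lra.
Qed.

Lemma contR_plus f g s0 : contR f s0 -> contR g s0 -> contR (fun s => f s + g s) s0.
Proof.
  intros Hf Hg e He.
  destruct (Hf (e/2) ltac:(lra)) as [d1 [Hd1 H1]].
  destruct (Hg (e/2) ltac:(lra)) as [d2 [Hd2 H2]].
  exists (Rmin d1 d2). split; [apply Rmin_pos; auto|]. intros s Hs.
  specialize (H1 s ltac:(pose proof (Rmin_l d1 d2); lra)).
  specialize (H2 s ltac:(pose proof (Rmin_r d1 d2); lra)).
  replace (f s + g s - (f s0 + g s0)) with ((f s - f s0) + (g s - g s0)) by ring.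
  pose proof (Rabs_triang (f s - f s0) (g s - g s0)). lra.
Qed.

Lemma contR_opp f s0 : contR f s0 -> contR (fun s => - f s) s0.
Proof.
  intros Hf e He. destruct (Hf e He) as [d [Hd H]]. exists d. split; auto.
  intros s Hs. replace (- f s - - f s0) with (- (f s - f s0)) by ring.
  rewrite Rabs_Ropp. auto.
Qed.

Lemma contR_mult f g s0 : contR f s0 -> contR g s0 -> contR (fun s => f s * g s) s0.
Proof.
  intros Hf Hg e He.
  set (K := 1 + Rabs (f s0) + Rabs (g s0)).
  assert (HK : K > 0) by (unfold K; pose proof (Rabs_pos (f s0)); pose proof (Rabs_pos (g s0)); lra).
  set (e' := Rmin 1 (e / K)).
  assert (He' : e' > 0) by (apply Rmin_pos; [lra| apply Rdiv_lt_0_compat; lra]).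
  assert (He'1 : e' <= 1) by apply Rmin_l.
  assert (He'K : e' * K <= e).
  { assert (e' <= e / K) by apply Rmin_r.
    apply (Rmult_le_compat_r K) in H; [|lra].
    replace (e / K * K) with e in H by (field; lra). exact H. }
  destruct (Hf e' He') as [d1 [Hd1 H1]].
  destruct (Hg e' He') as [d2 [Hd2 H2]].
  exists (Rmin d1 d2). split; [apply Rmin_pos; auto|]. intros s Hs.
  specialize (H1 s ltac:(pose proof (Rmin_l d1 d2); lra)).
  specialize (H2 s ltac:(pose proof (Rmin_r d1 d2); lra)).
  set (a := f s - f s0) in *. set (b := g s - g s0) in *.
  replace (f s * g s - f s0 * g s0) with (a * b + f s0 * b + g s0 * a) by (unfold a, b; ring).
  pose proof (Rabs_triang (a * b + f s0 * b) (g s0 * a)).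
  pose proof (Rabs_triang (a * b) (f s0 * b)).
  rewrite !Rabs_mult in *.
  pose proof (Rabs_pos a). pose proof (Rabs_pos b).
  pose proof (Rabs_pos (f s0)). pose proof (Rabs_pos (g s0)).
  assert (Rabs a * Rabs b <= Rabs a) by nra.
  assert (Rabs (f s0) * Rabs b <= Rabs (f s0) * e') by nra.
  assert (Rabs (g s0) * Rabs a <= Rabs (g s0) * e') by nra.
  unfold K in He'K. nra.
Qed.

Lemma contR_comp (F : R -> R) h s0 : contR h s0 -> continuity_pt F (h s0) ->
  contR (fun s => F (h s)) s0.
Proof.
  intros Hh HF e He.
  unfold continuity_pt, continue_in, limit1_in, limit_in in HF. simpl in HF.
  destruct (HF e He) as [a [Ha HFa]].
  destruct (Hh a Ha) as [d [Hd H]].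
  exists d. split; auto. intros s Hs.
  destruct (Req_dec (h s) (h s0)) as [E|E].
  - rewrite E, Rminus_diag, Rabs_R0. lra.
  - apply (HFa (h s)). split.
    + split; [constructor|auto].
    + unfold R_dist. apply H; auto.
Qed.

Definition contC (g : Cx -> Cx) (s0 : Cx) :=
  contR (fun s => Re (g s)) s0 /\ contR (fun s => Im (g s)) s0.

Lemma contC_const a s0 : contC (fun _ => a) s0.
Proof. split; apply contR_const. Qed.

Lemma contC_add f g s0 : contC f s0 -> contC g s0 -> contC (fun s => Cadd (f s) (g s)) s0.
Proof.
  intros [Hf1 Hf2] [Hg1 Hg2]. split; simpl; apply contR_plus; auto.
Qed.

Lemma contC_opp f s0 : contC f s0 -> contC (fun s => Copp (f s)) s0.
Proof. intros [Hf1 Hf2]. split; simpl; apply contR_opp; auto. Qed.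

Lemma contC_sub f g s0 : contC f s0 -> contC g s0 -> contC (fun s => Csub (f s) (g s)) s0.
Proof. intros Hf Hg. unfold Csub. apply contC_add; auto. apply contC_opp; auto. Qed.

Lemma contC_mul f g s0 : contC f s0 -> contC g s0 -> contC (fun s => Cmul (f s) (g s)) s0.
Proof.
  intros [Hf1 Hf2] [Hg1 Hg2]. split; simpl.
  - apply (contR_plus (fun s => Re (f s) * Re (g s)) (fun s => - (Im (f s) * Im (g s))));
      [|apply contR_opp]; apply contR_mult; auto.
  - apply contR_plus; apply contR_mult; auto.
Qed.

Lemma contC_Csum m (F : nat -> Cx -> Cx) s0 : (forall j, contC (F j) s0) ->
  contC (fun s => Csum m (fun j => F j s)) s0.
Proof.
  intros HF. induction m; simpl.
  - apply contC_const.
  - apply (contC_add (fun s => Csum m (fun j => F j s)) (F m)); auto.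
Qed.

Lemma det_cont s0 : forall n (M : Cx -> Mat), (forall i j, contC (fun s => M s i j) s0) ->
  contC (fun s => det n (M s)) s0.
Proof.
  induction n as [|m IH]; intros M HM.
  - exact (contC_const Defs.C1 s0).
  - change (contC (fun s => Csum (S m) (fun j =>
      Cmul (if Nat.even j then Defs.C1 else Copp Defs.C1)
        (Cmul (M s 0%nat j) (det m (minor0 (M s) j))))) s0).
    apply (contC_Csum (S m) (fun j s => Cmul (if Nat.even j then Defs.C1 else Copp Defs.C1)
        (Cmul (M s 0%nat j) (det m (minor0 (M s) j))))).
    intros j. apply contC_mul; [apply contC_const|].
    apply contC_mul; [apply HM|].
    apply (IH (fun s => minor0 (M s) j)). intros i k. unfold minor0. apply HM.
Qed.

Lemma cexp_cont s0 : contC (fun s => Cexp (Copp s)) s0.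
Proof.
  assert (He : forall x, continuity_pt exp x).
  { intros x. apply derivable_continuous_pt. apply derivable_exp. }
  split; simpl.
  - apply (contR_mult (fun s => exp (- Re s)) (fun s => cos (- Im s))).
    + apply (contR_comp exp (fun s => - Re s)); [apply contR_opp, contR_Re|apply He].
    + apply (contR_comp cos (fun s => - Im s)); [apply contR_opp, contR_Im|apply continuity_cos].
  - apply (contR_mult (fun s => exp (- Re s)) (fun s => sin (- Im s))).
    + apply (contR_comp exp (fun s => - Re s)); [apply contR_opp, contR_Re|apply He].
    + apply (contR_comp sin (fun s => - Im s)); [apply contR_opp, contR_Im|apply continuity_sin].
Qed.

Lemma sqrt_le_self1 x : 0 <= x -> sqrt x <= x + 1.
Proof.
  intros Hx. rewrite <- (sqrt_square (x + 1)) by lra.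
  apply sqrt_le_1_alt. nra.
Qed.

Lemma not_pole (D : Cx -> Cx) s0 : contC D s0 -> D s0 <> Defs.C0 ->
  ~ is_pole (fun s => Cinv (D s)) s0.
Proof.
  intros [HR HI] HD Hp.
  set (a0 := Re (D s0)) in *. set (b0 := Im (D s0)) in *.
  set (N0 := a0 * a0 + b0 * b0).
  assert (HN0 : N0 > 0).
  { unfold N0. destruct (Rlt_or_le 0 (a0*a0+b0*b0)); auto.
    exfalso. apply HD. apply Cx_ext; simpl; fold a0 b0; nra. }
  set (eps := Rmin 1 (N0 / 8)).
  assert (He : eps > 0) by (apply Rmin_pos; lra).
  assert (He1 : eps <= 1) by apply Rmin_l.
  assert (He2 : eps <= N0 / 8) by apply Rmin_r.
  destruct (HR eps He) as [d1 [Hd1 H1]].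
  destruct (HI eps He) as [d2 [Hd2 H2]].
  destruct (Hp (4 / N0 + 1)) as [dl [Hdl Hpl]].
  set (dm := Rmin dl (Rmin d1 d2)).
  assert (Hdm : dm > 0) by (apply Rmin_pos; auto; apply Rmin_pos; auto).
  assert (Hdm1 : dm <= dl) by apply Rmin_l.
  assert (Hdm2 : dm <= d1) by (pose proof (Rmin_r dl (Rmin d1 d2)); pose proof (Rmin_l d1 d2); unfold dm; lra).
  assert (Hdm3 : dm <= d2) by (pose proof (Rmin_r dl (Rmin d1 d2)); pose proof (Rmin_r d1 d2); unfold dm; lra).
  set (s := mkC (Re s0 + dm / 2) (Im s0)).
  assert (Hds : Cnorm (Csub s s0) = dm / 2).
  { unfold Cnorm, s. simpl.
    replace ((Re s0 + dm / 2 + - Re s0) * (Re s0 + dm / 2 + - Re s0) + (Im s0 + - Im s0) * (Im s0 + - Im s0))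
      with ((dm / 2) * (dm / 2)) by ring.
    apply sqrt_square. lra. }
  specialize (Hpl s ltac:(rewrite Hds; lra)).
  specialize (H1 s ltac:(rewrite Hds; lra)). specialize (H2 s ltac:(rewrite Hds; lra)).
  fold a0 in H1. fold b0 in H2.
  set (a := Re (D s)) in *. set (b := Im (D s)) in *.
  apply Rabs_def2 in H1. apply Rabs_def2 in H2.
  assert (HN : a * a + b * b > N0 / 4).
  { assert (Hee : eps * eps <= N0 / 8) by nra.
    assert (Ha2 : (a - a0) * (a - a0) < eps * eps) by nra.
    assert (Hb2 : (b - b0) * (b - b0) < eps * eps) by nra.
    assert (HA : a0 * a0 <= 2 * (a * a) + 2 * ((a - a0) * (a - a0))).
    { pose proof (Rle_0_sqr (2 * a - a0)). unfold Rsqr in *. nra. }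
    assert (HB : b0 * b0 <= 2 * (b * b) + 2 * ((b - b0) * (b - b0))).
    { pose proof (Rle_0_sqr (2 * b - b0)). unfold Rsqr in *. nra. }
    unfold N0 in *. lra. }
  revert Hpl. apply Rle_not_gt.
  unfold Cinv. fold a b. unfold Cnorm. simpl.
  assert (Hd0 : a * a + b * b <> 0) by lra.
  replace (a / (a * a + b * b) * (a / (a * a + b * b)) + - b / (a * a + b * b) * (- b / (a * a + b * b)))
    with (/ (a * a + b * b)) by (field; exact Hd0).
  set (d := a * a + b * b) in *.
  eapply Rle_trans; [apply sqrt_le_self1; left; apply Rinv_0_lt_compat; lra|].
  assert (/ d <= 4 / N0).
  { apply (Rmult_le_reg_l d); [lra|]. rewrite Rinv_r by lra.
    apply (Rmult_le_reg_l N0); [lra|]. field_simplify; lra. }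
  lra.
Qed.

Lemma dd1 c sg : c*c+sg*sg = 1 -> (c*c-sg*sg)*(c*c-sg*sg) + 2*c*sg*(2*c*sg) = 1.
Proof. intros H. nsatz. Qed.

Theorem theorem1p2 (n : nat) (theta : R) (w : braid_word) :
  (2 <= n)%nat ->
  Rabs theta < 2 * PI / INR n ->
  valid_word n w ->
  forall s : Cx,
    is_pole (fun s' => braid_zeta n (Cexp (mkC 0 theta)) w (Cexp (Copp s'))) s ->
    Re s = 0.
Proof.
  intros Hn Hth Hw s Hp.
  destruct (Req_dec (Re s) 0) as [|Hne]; [assumption|exfalso].
  set (c := cos (theta / 2)). set (sg := sin (theta / 2)).
  assert (Hcs : c * c + sg * sg = 1).
  { unfold c, sg. pose proof (sin2_cos2 (theta / 2)). unfold Rsqr in H. lra. }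
  assert (Hq : Cexp (mkC 0 theta) = mkC (c*c-sg*sg) (2*c*sg)).
  { unfold Cexp. simpl. rewrite exp_0, !Rmult_1_l.
    replace theta with (2 * (theta / 2)) at 1 2 by field.
    rewrite cos_2a, sin_2a. fold c sg. apply Cx_ext; simpl; ring. }
  assert (Hqi : Cinv (mkC (c*c-sg*sg) (2*c*sg)) = mkC (c*c-sg*sg) (-(2*c*sg))).
  { unfold Cinv. simpl.
    assert (Hd : (c*c-sg*sg)*(c*c-sg*sg) + 2*c*sg*(2*c*sg) = 1) by (apply dd1; exact Hcs).
    rewrite Hd. apply Cx_ext; simpl; field. }
  rewrite Hq in Hp.
  set (B := burau n (mkC (c*c-sg*sg) (2*c*sg)) w) in *.
  set (D := fun s' => det n (subM idM (scaleM (Cexp (Copp s')) B))).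
  assert (HD : D s <> Defs.C0).
  { intro H0. destruct (Bridge.kernel n _ H0) as [x [[j [Hj Hxj]] Hx]].
    apply Hxj. apply (no_kernel c sg n w (Cexp (Copp s)) x Hcs Hn Hqi Hw).
    - intros k Hk. apply (sq_pos n theta Hn Hth). auto.
    - unfold N2, Cexp. simpl.
      replace (exp (- Re s) * cos (- Im s) * (exp (- Re s) * cos (- Im s)) +
               exp (- Re s) * sin (- Im s) * (exp (- Re s) * sin (- Im s)))
        with (exp (- Re s) * exp (- Re s) * (Rsqr (sin (- Im s)) + Rsqr (cos (- Im s))))
        by (unfold Rsqr; ring).
      rewrite sin2_cos2, Rmult_1_r.
      pose proof (exp_pos (- Re s)).
      destruct (Rlt_or_le 0 (Re s)) as [Hpos|Hnpos].
      + assert (exp (- Re s) < 1) by (rewrite <- exp_0; apply exp_increasing; lra). nra.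
      + assert (Re s < 0) by (destruct Hnpos as [Hl|He]; [exact Hl|exfalso; auto]).
        assert (1 < exp (- Re s)) by (rewrite <- exp_0; apply exp_increasing; lra). nra.
    - intros i Hi. specialize (Hx i Hi). rewrite Bridge.kernel_eq in Hx by auto.
      fold B. apply Cx_ext; [apply (f_equal Re) in Hx | apply (f_equal Im) in Hx]; simpl in Hx; simpl; lra.
    - exact Hj. }
  apply (not_pole D s); auto.
  unfold D. apply det_cont. intros i j.
  unfold subM, scaleM. apply contC_sub; [apply contC_const|].
  apply contC_mul; [apply cexp_cont|apply contC_const].
Qed.
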